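(* Let $\mathcal{C}$ be a $k$-uniform clutter on vertex set $\{1,\dots,n\}$, let $I(\mathcal{C})\subseteq\mathbb{K}[x_1,\dots,x_n]$ be its edge ideal, and let $s\geq 2$ be an integer. (i) If $\operatorname{Indmath}(\mathcal{C})=2$, then $\operatorname{reg}(I(\mathcal{C})^s)\geq ks+k-1$. (ii) If $\operatorname{Indmath}(\mathcal{C})\geq 3$, then $\operatorname{reg}(I(\mathcal{C})^s)\geq ks+2k-2$.
   Context: A clutter $\mathcal{C}$ on a finite vertex set is a set of subsets (edges) none containing another; $k$-uniform means every edge has $k$ elements. The edge ideal is $I(\mathcal{C})=(\prod_{i\in e}x_i: e\in E(\mathcal{C}))$. An induced matching is a set of pairwise disjoint edges $e_1,\dots,e_t$ such that they are the only edges contained in $\bigcup_i e_i$; $\operatorname{Indmath}(\mathcal{C})$ is the maximum size of an induced matching. The Castelnuovo–Mumford regularity is $\operatorname{reg}(I)=\max\{j:\beta_{i,i+j}(I)\neq0\text{ for some } i\}$, where $\beta_{i,j}$ are the $\mathbb{Z}$-graded Betti numbers of $I$ (with $\beta_{0,j}$ counting minimal generators of degree $j$). *)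

(* Defs.v *)
From HB Require Import structures.
From mathcomp Require Import all_boot all_order all_algebra.
Set Implicit Arguments. Unset Strict Implicit. Unset Printing Implicit Defensive.
Import GRing.Theory.

(* Vertices {1,...,n} are modelled by 'I_n; a clutter is a set of edges. *)
Definition clutter (n : nat) (C : {set {set 'I_n}}) : Prop :=
  forall e f, e \in C -> f \in C -> e \subset f -> e = f.

Definition uniform (n k : nat) (C : {set {set 'I_n}}) : Prop :=
  forall e, e \in C -> #|e| = k.

Definition induced_matching (n : nat) (C M : {set {set 'I_n}}) : bool :=
  [&& M \subset C,
      [forall e in M, forall f in M, (e != f) ==> [disjoint e & f]] &
      [forall e in C, (e \subset \bigcup_(f in M) f) ==> (e \in M)]].

Definition indmatch (n : nat) (C : {set {set 'I_n}}) : nat :=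
  \max_(M : {set {set 'I_n}} | induced_matching C M) #|M|.

(* Monomials x^a of K[x_1..x_n] are exponent vectors a : 'I_n -> nat.
   A monomial ideal is given by the (boolean) set of monomials it contains;
   as a K-vector space it is spanned by these monomials. *)
Definition monideal (n : nat) := ('I_n -> nat) -> bool.

(* Monomials of I(C)^s: x^a is divisible by a product of s edge monomials
   (edges counted with multiplicity m e). *)
Definition edge_ideal_pow (n : nat) (C : {set {set 'I_n}}) (s : nat)
  : monideal n :=
  fun a => [exists m : {ffun {set 'I_n} -> 'I_s.+1},
    [&& (\sum_(e : {set 'I_n}) (m e : nat) == s)%N,
        [forall e, (0 < m e)%N ==> (e \in C)] &
        [forall v, (\sum_(e : {set 'I_n} | v \in e) (m e : nat) <= a v)%N]]].

(* Koszul complex I (x) K(x_1..x_n) in multidegree b: homological degree i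
   has K-basis  x^(b - 1_F) (x) e_F  with |F| = i, F \subset supp b and
   x^(b - 1_F) \in I. *)
Definition kbasis (n : nat) (I : monideal n) (b : 'I_n -> nat) (i : nat)
  (F : {set 'I_n}) : bool :=
  [&& #|F| == i, [forall v in F, 0 < b v]%N & I (fun v => b v - (v \in F))%N].

Definition kdim (n : nat) (I : monideal n) (b : 'I_n -> nat) (i : nat) : nat :=
  #|[set F | kbasis I b i F]|.

(* Matrix of the Koszul differential d_i : C_i -> C_{i-1} (multidegree b),
   x^c (x) e_F |-> sum_{v in F} (-1)^{#{u in F | u < v}} x^(c + e_v) (x) e_(F\v),
   rows indexed by F, columns by G (padded with zeros outside the bases). *)
Definition kdiff (K : fieldType) (n : nat) (I : monideal n) (b : 'I_n -> nat)
  (i : nat) : 'M[K]_(#|{set 'I_n}|, #|{set 'I_n}|) :=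
  (\matrix_(r, c)
    let F : {set 'I_n} := enum_val r in let G : {set 'I_n} := enum_val c in
    if kbasis I b i F && kbasis I b i.-1 G && (0 < i)%N then
      \sum_(v in F | G == F :\ v) (-1) ^+ #|[set u in F | (u < v)%N]|
    else 0)%R.

(* Multigraded Betti number beta_{i,b}(I) = dim_K Tor_i(I, K)_b, computed as
   the homology in degree i of the Koszul complex I (x) K(x). *)
Definition betti (K : fieldType) (n : nat) (I : monideal n) (i : nat)
  (b : 'I_n -> nat) : nat :=
  (kdim I b i - \rank (kdiff K I b i) - \rank (kdiff K I b i.+1))%N.

Definition total_degree (n : nat) (b : 'I_n -> nat) : nat := (\sum_v b v)%N.

(* Z-graded Betti number beta_{i,j}(I) = sum_{|b| = j} beta_{i,b}(I) is
   nonzero iff some multigraded one in total degree j is nonzero. *)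
Definition betti_nonzero (K : fieldType) (n : nat) (I : monideal n)
  (i j : nat) : Prop :=
  exists b : 'I_n -> nat, total_degree b = j /\ betti K I i b <> 0%N.

(* reg(I) = max{ j : beta_{i,i+j}(I) <> 0 for some i }; as this maximum is over
   a finite nonempty set, reg(I) >= r iff such a j >= r exists. *)
Definition reg_ge (K : fieldType) (n : nat) (I : monideal n) (r : nat) : Prop :=
  exists i j : nat, (r <= j)%N /\ betti_nonzero K I i (i + j).

(* Main.v *)
Require Import Defs.
From HB Require Import structures.
From mathcomp Require Import all_boot all_order all_algebra zify.
Set Implicit Arguments. Unset Strict Implicit. Unset Printing Implicit Defensive.
Import GRing.Theory.
Section Dev.
Local Open Scope ring_scope.

Lemma rank_sum_delta (K : fieldType) N (w : pred 'I_N) :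
  (\rank (\sum_(c | w c) (delta_mx c c : 'M[K]_N))%R <= #|w|)%N.
Proof.
rewrite -sum1_card.
apply: (big_ind2 (fun (M : 'M[K]_N) m => \rank M <= m)%N).
- by rewrite mxrank0.
- move=> M1 m1 M2 m2 h1 h2. 
  apply: leq_trans (mxrank_add M1 M2) _. exact: leq_add.
- by move=> c _; rewrite mxrank_delta.
Qed.

Lemma LA (K : fieldType) N (A B : 'M[K]_N) (w : pred 'I_N) (z : 'rV[K]_N) (y : 'cV[K]_N) :
  B *m A = 0 -> (forall r c, ~~ w r -> A r c = 0) -> (forall r c, ~~ w c -> B r c = 0) ->
  (forall c, ~~ w c -> z 0 c = 0) -> z *m A = 0 -> B *m y = 0 -> z *m y != 0 ->
  (\rank A + \rank B < #|w|)%N.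
Proof.
move=> BA Aw Bw zw zA By zy.
pose P : 'M[K]_N := (\sum_(c | w c) delta_mx c c)%R.
have PE : forall r c, P r c = if (r == c) && w r then 1 else 0.
  move=> r c; rewrite /P summxE.
  case: (boolP (w r)) => wr.
    rewrite (bigD1 r) //= mxE eqxx /= big1 ?addr0.
      by rewrite andbT eq_sym; case: (r == c).
    move=> i /andP[_ ir]; rewrite mxE; case: eqP => // ri; by rewrite ri eqxx in ir.
  rewrite andbF big1 // => i wi; rewrite mxE.
  case: eqP => // ri; by rewrite ri wi in wr.
have AP : A = P *m A.
  apply/matrixP => r c; rewrite mxE (bigD1 r) //= PE eqxx /= big1 ?addr0.
    by case: (boolP (w r)) => wr; rewrite ?mul1r // mul0r Aw.
  by move=> i /negbTE ir; rewrite PE eq_sym ir mul0r.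
have XP : forall m (X : 'M[K]_(m, N)), (forall r c, ~~ w c -> X r c = 0) -> X = X *m P.
  move=> m X Xw; apply/matrixP => r c; rewrite mxE (bigD1 c) //= PE eqxx /= big1 ?addr0.
    by case: (boolP (w c)) => wc; rewrite ?mulr1 // mulr0 Xw.
  by move=> i /negbTE ir; rewrite PE ir mulr0.
have rP : (\rank P <= #|w|)%N by apply: rank_sum_delta.
have h1 := mxrank_mul_ker P A.
rewrite -AP in h1.
pose X := col_mx B z.
have XPA : (X <= P :&: kermx A)%MS.
  rewrite sub_capmx; apply/andP; split.
    rewrite (XP _ X); first exact: submxMl.
    move=> r c wc; rewrite /X; rewrite mxE; case: (split r) => r'.
      by rewrite Bw.
    by rewrite ord1 zw.
  by rewrite sub_kermx /X mul_col_mx BA zA col_mx0.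
have zB : ~~ (z <= B)%MS.
  apply/negP => /submxP[D zD]; move: zy; by rewrite zD -mulmxA By mulmx0 eqxx.
have rX : (\rank B < \rank X)%N.
  have : (B < X)%MS.
    rewrite ltmxE /X; apply/andP; split.
      by rewrite -addsmxE addsmxSl.
    by rewrite col_mx_sub negb_and zB orbT.
  by rewrite ltmxErank => /andP[].
have := mxrankS XPA.
lia.
Qed.
Section CB.
Variables (K : fieldType) (n : nat).
Implicit Types (F G H : {set 'I_n}) (f : {set 'I_n} -> K).

Definition sg F (v : 'I_n) : K := (-1) ^+ #|[set u in F | (u < v)%N]|.
Definition cb f F : K := \sum_(v in F) sg F v * f (F :\ v).

Lemma cb_eq f g F : (forall v, v \in F -> f (F :\ v) = g (F :\ v)) -> cb f F = cb g F.
Proof. by move=> h; apply: eq_bigr => v vF; rewrite h. Qed.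

Lemma cb_delta f F : \sum_G cb (fun H => (G == H)%:R) F * f G = cb f F.
Proof.
rewrite /cb; under eq_bigr => G _ do rewrite mulr_suml.
rewrite exchange_big /=; apply: eq_bigr => v vF.
rewrite (bigD1 (F :\ v)) //= eqxx mulr1 big1 ?addr0 // => G /negbTE ->.
by rewrite mulr0 mul0r.
Qed.

Lemma sg_swap F v w : v \in F -> w \in F -> (v < w)%N ->
  sg F v * sg (F :\ v) w = - (sg F w * sg (F :\ w) v).
Proof.
move=> vF wF vw; rewrite /sg.
have e1 : [set u in F :\ v | (u < w)%N] = [set u in F | (u < w)%N] :\ v.
  by apply/setP => u; rewrite !inE andbA.
have e2 : [set u in F :\ w | (u < v)%N] = [set u in F | (u < v)%N].
  apply/setP => u; rewrite !inE; case: eqP => //= ->.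
  by rewrite ltnNge (ltnW vw) andbF.
rewrite e1 e2 (cardsD1 v [set u in F | (u < w)%N]) inE vF vw /= add1n exprS.
by rewrite mulN1r mulNr opprK mulrC.
Qed.

Lemma cbcb f F : cb (fun H => cb f H) F = 0.
Proof.
rewrite /cb.
pose Y v w := sg F v * sg (F :\ v) w * f (F :\ v :\ w).
transitivity (\sum_v \sum_w (if [&& v \in F, w \in F & (v < w)%N] then Y v w else 0)
  + \sum_v \sum_w (if [&& v \in F, w \in F & (w < v)%N] then Y v w else 0)).
  rewrite -big_split big_mkcond /=; apply: eq_bigr => v _.
  case vF: (v \in F); last by rewrite big1 ?addr0 // => w _.
  rewrite mulr_sumr -big_split big_mkcond /=; apply: eq_bigr => w _.
  rewrite !inE /Y mulrA.
  case: (ltngtP v w) => [vw|wv|/val_inj ->]; rewrite ?eqxx ?andbF ?addr0 ?add0r //.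
  - have -> : (w != v) by apply/eqP => e; rewrite e ltnn in vw.
    by rewrite andbT.
  - have -> : (w != v) by apply/eqP => e; rewrite e ltnn in wv.
    by rewrite andbT.
rewrite [X in _ + X]exchange_big -big_split big1 // => v _.
rewrite -big_split big1 // => w _ /=.
case vF: (v \in F); case wF: (w \in F); rewrite /= ?addr0 //.
case: (ltngtP v w) => vw; rewrite ?addr0 //.
rewrite /Y sg_swap // -mulNr.
have -> : F :\ w :\ v = F :\ v :\ w by rewrite setDDl setUC -setDDl.
by rewrite !mulNr addNr.
Qed.

Lemma cb_zero f F : (forall v, v \in F -> f (F :\ v) = 0) -> cb f F = 0.
Proof. by move=> h; apply: big1 => v vF; rewrite h ?mulr0. Qed.

Lemma sg_neq0 F v : sg F v != 0.
Proof. by rewrite /sg signr_eq0. Qed.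

Lemma cb_set1 f x : cb f [set x] = f set0.
Proof.
rewrite /cb big_set1 setDv /sg.
have -> : [set u in [set x] | (u < x)%N] = set0.
  by apply/setP => u; rewrite !inE; case: eqP => // ->; rewrite ltnn.
by rewrite cards0 expr0 mul1r.
Qed.

Lemma cb_set2 f u w : u != w ->
  cb f [set u; w] = sg [set u; w] u * f [set w] + sg [set u; w] w * f [set u].
Proof.
move=> uw; rewrite /cb big_setU1 ?inE // big_set1.
have -> : [set u; w] :\ u = [set w].
  apply/setP => x; rewrite !inE; case: (x =P u) => [->|] /=; last by [].
  by apply/esym/negbTE.
have -> : [set u; w] :\ w = [set u].
  apply/setP => x; rewrite !inE; case: (x =P w) => [->|] /=; last by rewrite orbF.
  by rewrite eq_sym (negbTE uw).
by [].
Qed.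

Lemma cb2_one f G : #|G| = 2%N -> (forall v, v \in G -> f (G :\ v) = 1) -> cb f G = 0.
Proof.
move=> cG h.
rewrite -(cbcb (fun _ => 1) G); apply: cb_eq => v vG.
rewrite h //.
have : #|G :\ v| = 1%N by move: cG; rewrite (cardsD1 v) vG add1n => -[].
by move=> /eqP /cards1P [x ->]; rewrite cb_set1.
Qed.

End CB.

Definition upclosed n (I : monideal n) :=
  forall a a' : 'I_n -> nat, I a -> (forall v, a v <= a' v)%N -> I a'.

Section Koszul.
Variables (K : fieldType) (n : nat) (I : monideal n) (b : 'I_n -> nat).
Hypothesis upI : upclosed I.

Lemma kdiffE i r c : kdiff K I b i r c =
  if kbasis I b i (enum_val r) && kbasis I b i.-1 (enum_val c) && (0 < i)%N
  then cb (fun H => (enum_val c == H)%:R) (enum_val r) else 0.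
Proof.
rewrite /kdiff mxE; case: ifP => // _; rewrite /cb big_mkcondr /=.
by apply: eq_bigr => v _; case: eqP; rewrite ?mulr1 ?mulr0.
Qed.

Lemma kbasis_face i F v : kbasis I b i.+1 F -> v \in F -> kbasis I b i (F :\ v).
Proof.
case/and3P => /eqP cF /forall_inP bF IF vF; apply/and3P; split.
- by move: cF; rewrite (cardsD1 v) vF add1n => -[->].
- by apply/forall_inP => u; rewrite inE => /andP[_ /bF].
- apply: (upI IF) => u; apply: leq_sub2l; rewrite inE.
  by case: (u \in F); rewrite ?andbT ?andbF ?leq_b1.
Qed.

Lemma sum_enum (g : {set 'I_n} -> K) :
  \sum_(k < #|{set 'I_n}|) g (enum_val k) = \sum_H g H.
Proof. by rewrite (big_enum_val g). Qed.

Lemma key_zero i (F : {set 'I_n}) (c : 'I_#|{set 'I_n}|) : (forall v, v \in F -> kbasis I b i (F :\ v)) ->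
  \sum_k cb (fun H => (enum_val k == H)%:R) F * kdiff K I b i k c = 0.
Proof.
move=> hF.
transitivity (\sum_H cb (fun H' => (H == H')%:R : K) F * kdiff K I b i (enum_rank H) c).
  rewrite -sum_enum; apply: eq_bigr => k _; by rewrite enum_valK.
rewrite cb_delta.
transitivity (cb (fun H => if kbasis I b i.-1 (enum_val c) && (0 < i)%N then
            cb (fun H' => (enum_val c == H')%:R : K) H else 0) F).
  by apply: cb_eq => v vF; rewrite kdiffE enum_rankK hF.
by case: (kbasis I b i.-1 (enum_val c) && (0 < i)%N); [apply: cbcb | rewrite /cb; apply: big1 => v _; rewrite mulr0].
Qed.

Lemma key_col i (F : {set 'I_n}) (f : {set 'I_n} -> K) r : enum_val r = F ->
  (kdiff K I b i.+1 *m \col_k f (enum_val k)) r 0 = if kbasis I b i.+1 F then cb f F else 0.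
Proof.
move=> rF; rewrite mxE.
case: (boolP (kbasis I b i.+1 F)) => hF; last first.
  by rewrite big1 // => k _; rewrite kdiffE rF (negbTE hF) mul0r.
transitivity (\sum_H cb (fun H' => (H == H')%:R : K) F *
   (if kbasis I b i H then f H else 0)).
  rewrite -sum_enum; apply: eq_bigr => k _.
  by rewrite kdiffE rF hF /= mxE andbT; case: ifP; rewrite ?mulr0 ?mul0r.
rewrite cb_delta; apply: cb_eq => v vF.
by rewrite kbasis_face.
Qed.

Lemma card_w i :
  #|[pred c : 'I_#|{set 'I_n}| | kbasis I b i (enum_val c)]| = kdim I b i.
Proof.
rewrite /kdim -!sum1_card.
transitivity (\sum_(x in predT | kbasis I b i x) 1%N).
  rewrite [RHS]big_enum_val_cond; apply: eq_bigl => c; by rewrite !inE.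
apply: eq_bigl => F; by rewrite !inE.
Qed.

Lemma betti_pos i (F0 : {set 'I_n}) (f : {set 'I_n} -> K) : (0 < i)%N ->
  (forall v, v \in F0 -> kbasis I b i (F0 :\ v)) ->
  (forall H, kbasis I b i.+1 H -> cb f H = 0) -> cb f F0 != 0 ->
  betti K I i b <> 0%N.
Proof.
move=> i0 hF0 hcb hnz.
set A := kdiff K I b i; set B := kdiff K I b i.+1.
pose w := [pred c : 'I_#|{set 'I_n}| | kbasis I b i (enum_val c)].
pose z := \row_(c < #|{set 'I_n}|) cb (fun H => (enum_val c == H)%:R : K) F0.
pose y := \col_(c < #|{set 'I_n}|) f (enum_val c).
have h := @LA K _ A B w z y.
have BA : B *m A = 0.
  apply/matrixP => r c; rewrite !mxE.
  case: (boolP (kbasis I b i.+1 (enum_val r))) => hr; last first.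
    by apply: big1 => k _; rewrite /B kdiffE (negbTE hr) mul0r.
  transitivity (\sum_k cb (fun H => (enum_val k == H)%:R : K) (enum_val r) * kdiff K I b i k c); last first.
    by apply: key_zero => v vF; apply: kbasis_face.
  apply: eq_bigr => k _; rewrite [B r k]kdiffE hr /=.
  case: (boolP (kbasis I b i (enum_val k))) => hk //=.
  by rewrite /A kdiffE (negbTE hk) !mulr0.
have Aw : forall r c, ~~ w r -> A r c = 0.
  by move=> r c; rewrite inE => hr; rewrite /A kdiffE (negbTE hr).
have Bw : forall r c, ~~ w c -> B r c = 0.
  by move=> r c; rewrite inE => hc; rewrite /B kdiffE /= (negbTE hc) andbF.
have zw : forall c, ~~ w c -> z 0 c = 0.
  move=> c; rewrite inE => hc; rewrite mxE /cb; apply: big1 => v vF.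
  case: eqP; rewrite ?mulr0 // => e.
  by move: hc; rewrite e hF0.
have zA : z *m A = 0.
  apply/matrixP => r c; rewrite [RHS]mxE -(key_zero c hF0) mxE.
  by apply: eq_bigr => k _; rewrite mxE.
have By : B *m y = 0.
  apply/matrixP => r c; rewrite ord1 [RHS]mxE /B /y (key_col _ _ (erefl _)).
  by case: ifP => // /hcb.
have zy : z *m y != 0.
  have E : (z *m y) 0 0 = cb f F0.
    rewrite mxE.
    transitivity (\sum_H cb (fun H' => (H == H')%:R : K) F0 * f H); last by rewrite cb_delta.
    rewrite -sum_enum; apply: eq_bigr => k _; by rewrite !mxE.
  apply/eqP => e; move: hnz; by rewrite -E e mxE eqxx.
have := h BA Aw Bw zw zA By zy.
rewrite card_w /betti -/A -/B.
lia.
Qed.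

End Koszul.

Lemma up_edge n (C : {set {set 'I_n}}) s : upclosed (edge_ideal_pow C s).
Proof.
move=> a a' /existsP[m /and3P[h1 h2 /forallP h3]] h.
apply/existsP; exists m; rewrite h1 h2 /=; apply/forallP => v.
exact: leq_trans (h3 v) (h v).
Qed.

Lemma sum_ind (T : finType) (P : pred T) (x : nat) (e0 : T) :
  (\sum_(e | P e) x * (e == e0) = x * P e0)%N.
Proof.
rewrite big_mkcond (bigD1 e0) //= big1 ?addn0.
  by rewrite eqxx muln1; case: (P e0); rewrite ?muln1 ?muln0.
by move=> e /negbTE ->; rewrite muln0; case: (P e).
Qed.

Lemma memI n (C : {set {set 'I_n}}) s (e1 e2 e3 : {set 'I_n}) p q r (a : 'I_n -> nat) :
  e1 \in C -> e2 \in C -> e3 \in C -> (p + q + r = s)%N ->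
  (forall v, p * (v \in e1) + q * (v \in e2) + r * (v \in e3) <= a v)%N ->
  edge_ideal_pow C s a.
Proof.
move=> C1 C2 C3 pqr h.
pose mv (e : {set 'I_n}) := (p * (e == e1) + q * (e == e2) + r * (e == e3))%N.
have mvs : forall e, (mv e < s.+1)%N.
  move=> e; rewrite ltnS -pqr /mv.
  by case: (e == e1); case: (e == e2); case: (e == e3); rewrite ?muln1 ?muln0; lia.
apply/existsP; exists [ffun e => Ordinal (mvs e)]; apply/and3P; split.
- rewrite (eq_bigr mv); last by move=> e _; rewrite ffunE.
  by rewrite /mv !big_split /= !(sum_ind predT) /= !muln1 pqr.
- apply/forallP => e; rewrite ffunE /= /mv; apply/implyP.
  case: (e =P e1) => [->//|_]; case: (e =P e2) => [->//|_]; case: (e =P e3) => [->//|_].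
  by rewrite !muln0.
- apply/forallP => v; rewrite (eq_bigr mv); last by move=> e _; rewrite ffunE.
  by rewrite /mv !big_split /= !(sum_ind (fun e : {set 'I_n} => v \in e)) h.
Qed.

Lemma notI n (C : {set {set 'I_n}}) s (M : {set {set 'I_n}}) (E : {set 'I_n}) a :
  edge_ideal_pow C s a -> (forall e, e \in C -> e \subset E -> e \in M) ->
  (forall v, v \notin E -> a v = 0%N) ->
  exists m : {set 'I_n} -> nat, (s <= \sum_(e in M) m e)%N /\
    (forall e v, e \in M -> v \in e -> m e <= a v)%N.
Proof.
move=> /existsP[m /and3P[/eqP hs /forallP hC /forallP hv]] hM hE.
have bnd : forall (e : {set 'I_n}) v, v \in e -> (m e <= a v)%N.
  move=> e v ve; apply: leq_trans (hv v).
  by rewrite (bigD1 e) //= leq_addr.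
exists (fun e => nat_of_ord (m e)); split; last by move=> e v _; apply: bnd.
apply: (@leq_trans (\sum_e (m e : nat))); first by rewrite hs.
rewrite [X in (X <= _)%N](bigID (fun e => e \in M)) /= [X in (_ + X <= _)%N]big1 ?addn0 // => e eM.
apply/eqP; rewrite -leqn0 leqNgt; apply/negP => pos.
move: eM; rewrite hM //.
  by move: (hC e); rewrite pos.
apply/subsetP => v ve; apply/negPn/negP => vE.
by move: (bnd e v ve); rewrite hE // leqn0 => /eqP e0; rewrite e0 in pos.
Qed.

Lemma sum_in n (A : {set 'I_n}) : (\sum_v ((v \in A) : nat) = #|A|)%N.
Proof.
rewrite -sum1_card [RHS]big_mkcond /=; apply: eq_bigr => v _; by case: (v \in A).
Qed.

Lemma part1 (K : fieldType) n k s (C : {set {set 'I_n}}) (e1 e2 : {set 'I_n}) :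
  (1 <= s)%N -> (0 < k)%N -> e1 \in C -> e2 \in C -> #|e1| = k -> #|e2| = k ->
  [disjoint e1 & e2] ->
  (forall e, e \in C -> e \subset e1 :|: e2 -> e \in [set e1; e2]) ->
  reg_ge K (edge_ideal_pow C s) (k * s + k - 1).
Proof.
move=> s1 k0 C1 C2 c1 c2 dis hM.
have d12 : forall x, x \in e1 -> x \in e2 = false by move=> x; apply: disjointFr.
have d21 : forall x, x \in e2 -> x \in e1 = false by move=> x; apply: disjointFl.
have [u u1] : exists u, u \in e1 by apply/card_gt0P; rewrite c1.
have [w w2] : exists w, w \in e2 by apply/card_gt0P; rewrite c2.
have uw : u != w by apply/eqP => e; move: (d12 _ u1); rewrite e w2.
have e12 : e1 != e2 by apply/eqP => e; move: (d12 _ u1); rewrite -e u1.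
pose b v := ((v \in e1) + s * (v \in e2))%N.
pose I := edge_ideal_pow C s.
exists 1%N, (k * s + k - 1)%N; split => //.
exists b; split.
  rewrite /total_degree /b big_split /= sum_in -big_distrr /= sum_in c1 c2.
  rewrite (mulnC s k); move: k0; clear; lia.
pose f (G : {set 'I_n}) := (#|G :&: e1|)%:R : K.
apply: (@betti_pos K n I b (@up_edge n C s) 1 [set u; w] f) => //.
- move=> v; rewrite !inE => /orP[] /eqP ->.
  + have -> : [set u; w] :\ u = [set w].
      apply/setP => x; rewrite !inE; case: (x =P u) => [->|] /=; last by [].
      by rewrite (negbTE uw).
    apply/and3P; split; first by rewrite cards1.
      by apply/forall_inP => x; rewrite inE => /eqP ->; rewrite /b w2 d21 //= muln1.
    apply: (@memI n C s e1 e2 e2 1 (s - 1) 0) => //; first by lia.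
    move=> x; rewrite /b inE; case: (x =P w) => [->|_].
      by rewrite w2 d21 //=; lia.
    by case: (x \in e1); case: (x \in e2) => /=; lia.
  + have -> : [set u; w] :\ w = [set u].
      apply/setP => x; rewrite !inE; case: (x =P w) => [->|] /=; last by rewrite orbF.
      by rewrite eq_sym (negbTE uw).
    apply/and3P; split; first by rewrite cards1.
      by apply/forall_inP => x; rewrite inE => /eqP ->; rewrite /b u1 d12 //=.
    apply: (@memI n C s e1 e2 e2 0 s 0) => //; first by lia.
    move=> x; rewrite /b inE; case: (x =P u) => [->|_].
      by rewrite u1 d12 //=; lia.
    by case: (x \in e1); case: (x \in e2) => /=; lia.
- move=> H /and3P[/eqP cH /forall_inP bH IH].
  have HE : forall x, x \in H -> (x \in e1) || (x \in e2).
    by move=> x /bH; rewrite /b; case: (x \in e1); case: (x \in e2); rewrite /= ?muln0.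
  have hE : forall v, v \notin e1 :|: e2 -> (b v - (v \in H))%N = 0%N.
    by move=> v; rewrite inE negb_or /b => /andP[/negbTE -> /negbTE ->]; rewrite muln0.
  have [m [sm bm]] := notI IH hM hE.
  rewrite big_setU1 ?inE // big_set1 in sm.
  have {}sm : (s <= m e1 + m e2)%N by [].
  have M1 : e1 \in [set e1; e2] by rewrite !inE eqxx.
  have M2 : e2 \in [set e1; e2] by rewrite !inE eqxx orbT.
  case: (boolP [exists x in H, x \in e1]) => [/exists_inP [x xH x1]|nH].
    have He1 : forall y, y \in H -> y \in e1.
      move=> y yH; case/orP: (HE y yH) => // y2; exfalso.
      have := bm e1 x M1 x1; have := bm e2 y M2 y2.
      rewrite /b xH yH x1 (d12 x x1) y2 (d21 y y2) /=; move=> h2 h1; move: sm h1 h2 s1; clear; lia.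
    apply: cb2_one => // v vH; rewrite /f.
    have -> : (H :\ v) :&: e1 = H :\ v.
      by apply/setIidPl/subsetP => y; rewrite inE => /andP[_ /He1].
    by move: cH; rewrite (cardsD1 v) vH add1n => -[->].
  apply: cb_zero => v vH; rewrite /f.
  have -> : (H :\ v) :&: e1 = set0.
    apply/setP => y; rewrite !inE; apply/negP => /andP[/andP[_ yH] y1].
    by move: nH; apply/negP/negPn/exists_inP; exists y.
  by rewrite cards0.
- rewrite cb_set2 // /f.
  have -> : [set w] :&: e1 = set0.
    by apply/setP => y; rewrite !inE; case: (y =P w) => // ->; rewrite d21.
  have -> : [set u] :&: e1 = [set u].
    by apply/setIidPl/subsetP => y; rewrite inE => /eqP ->.
  by rewrite cards0 cards1 mulr0 add0r mulr1 sg_neq0.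
Qed.

Lemma cardI0 n (G A : {set 'I_n}) : (forall x, x \in G -> x \notin A) -> #|G :&: A| = 0%N.
Proof.
move=> h; apply/eqP; rewrite cards_eq0; apply/eqP/setP => x; rewrite !inE.
by apply/negP => /andP[/h /negP].
Qed.

Lemma cardIall n (G A : {set 'I_n}) : (forall x, x \in G -> x \in A) -> #|G :&: A| = #|G|.
Proof. by move=> h; rewrite (setIidPl _) //; apply/subsetP. Qed.

Section P2.
Variables (K : fieldType) (n : nat) (e1 e2 : {set 'I_n}).
Hypothesis d12 : forall x, x \in e1 -> x \in e2 = false.
Definition g1 (G : {set 'I_n}) : K := (#|G :&: e1|)%:R.
Definition h1 (G : {set 'I_n}) : K := (#|G :&: e2|)%:R.
Definition f2 (G : {set 'I_n}) := cb g1 G * h1 G.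

Lemma cbg1_0 (G : {set 'I_n}) : (forall x, x \in G -> x \notin e1) -> cb g1 G = 0.
Proof.
move=> h; apply: cb_zero => v vG; rewrite /g1 cardI0 // => x; rewrite inE => /andP[_].
exact: h.
Qed.

Lemma h1_0 (G : {set 'I_n}) : (forall x, x \in G -> x \notin e2) -> h1 G = 0.
Proof. by move=> h; rewrite /h1 cardI0. Qed.

Lemma f2_two (G : {set 'I_n}) : #|G| = 2%N -> (forall x, x \in G -> (x \in e1) || (x \in e2)) ->
  f2 G = cb g1 G.
Proof.
move=> cG hG; rewrite /f2.
case: (boolP [forall x in G, x \in e1]) => [/forall_inP a1|].
  have -> : cb g1 G = 0.
    apply: cb2_one => // v vG; rewrite /g1 cardIall.
      by move: cG; rewrite (cardsD1 v) vG add1n => -[->].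
    by move=> x; rewrite inE => /andP[_ /a1].
  by rewrite mul0r.
case: (boolP [exists x in G, x \in e1]) => [/exists_inP [x xG x1]|n1]; last first.
  rewrite cbg1_0 ?mul0r // => x xG; apply/negP => x1.
  by move: n1; apply/negP/negPn/exists_inP; exists x.
rewrite negb_forall => /existsP [y]; rewrite negb_imply => /andP[yG ny1].
have y2 : y \in e2 by move: (hG y yG); rewrite (negbTE ny1).
have -> : h1 G = 1.
  rewrite /h1.
  have -> : G :&: e2 = [set y].
    apply/setP => z; rewrite !inE; case: (z =P y) => [->|nzy]; first by rewrite yG y2.
    apply/negP => /andP[zG z2].
    have : G = [set x; y].
      have xy : x != y by apply/eqP => e; move: (d12 x1); rewrite e y2.
      apply/esym/eqP; rewrite eqEcard cG cards2 xy /= andbT.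
      by apply/subsetP => t; rewrite !inE => /orP[] /eqP ->.
    move=> GE; move: zG; rewrite GE !inE; case/orP => /eqP ez.
      by move: z2; rewrite ez (d12 x1).
    by apply: nzy.
  by rewrite cards1.
by rewrite mulr1.
Qed.
End P2.

Lemma part2 (K : fieldType) n k s (C : {set {set 'I_n}}) (e1 e2 e3 : {set 'I_n}) :
  (1 <= s)%N -> (0 < k)%N -> e1 \in C -> e2 \in C -> e3 \in C ->
  #|e1| = k -> #|e2| = k -> #|e3| = k ->
  [disjoint e1 & e2] -> [disjoint e1 & e3] -> [disjoint e2 & e3] ->
  (forall e, e \in C -> e \subset e1 :|: e2 :|: e3 -> e \in e1 |: [set e2; e3]) ->
  reg_ge K (edge_ideal_pow C s) (k * s + 2 * k - 2).
Proof.
move=> s1 k0 C1 C2 C3 c1 c2 c3 dis12 dis13 dis23 hM.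
have d12 : forall x, x \in e1 -> x \in e2 = false by move=> x; apply: disjointFr.
have d21 : forall x, x \in e2 -> x \in e1 = false by move=> x; apply: disjointFl.
have d13 : forall x, x \in e1 -> x \in e3 = false by move=> x; apply: disjointFr.
have d31 : forall x, x \in e3 -> x \in e1 = false by move=> x; apply: disjointFl.
have d23 : forall x, x \in e2 -> x \in e3 = false by move=> x; apply: disjointFr.
have d32 : forall x, x \in e3 -> x \in e2 = false by move=> x; apply: disjointFl.
have [u1 u11] : exists u, u \in e1 by apply/card_gt0P; rewrite c1.
have [u2 u22] : exists u, u \in e2 by apply/card_gt0P; rewrite c2.
have [u3 u33] : exists u, u \in e3 by apply/card_gt0P; rewrite c3.
have n12 : u1 != u2 by apply/eqP => e; move: (d12 _ u11); rewrite e u22.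
have n13 : u1 != u3 by apply/eqP => e; move: (d13 _ u11); rewrite e u33.
have n23 : u2 != u3 by apply/eqP => e; move: (d23 _ u22); rewrite e u33.
have E12 : e1 != e2 by apply/eqP => e; move: (d12 _ u11); rewrite -e u11.
have E13 : e1 != e3 by apply/eqP => e; move: (d13 _ u11); rewrite -e u11.
have E23 : e2 != e3 by apply/eqP => e; move: (d23 _ u22); rewrite -e u22.
pose b v := ((v \in e1) + (v \in e2) + s * (v \in e3))%N.
pose I := edge_ideal_pow C s.
exists 2%N, (k * s + 2 * k - 2)%N; split => //.
exists b; split.
  rewrite /total_degree /b !big_split /= !sum_in -big_distrr /= sum_in c1 c2 c3.
  rewrite (mulnC s k); move: k0; clear; lia.
pose F0 := u3 |: [set u1; u2].
have F0E : forall x, (x \in F0) = [|| x == u1, x == u2 | x == u3].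
  by move=> x; rewrite !inE; case: (x == u1); case: (x == u2); case: (x == u3).
have cF0 : #|F0| = 3%N.
  by rewrite cardsU1 cards2 n12 !inE negb_or eq_sym n13 eq_sym n23.
apply: (@betti_pos K n I b (@up_edge n C s) 2 F0 (@f2 K n e1 e2)) => //.
- move=> v vF; apply/and3P; split.
  + by move: cF0; rewrite (cardsD1 v) vF add1n => -[->].
  + apply/forall_inP => x; rewrite inE F0E => /andP[_].
    case/or3P => /eqP ->; rewrite /b; [rewrite u11|rewrite u22|rewrite u33];
      move: s1; clear; case: (_ \in _); case: (_ \in _); rewrite /=; lia.
  + have f12 : (u1 == u2) = false by apply/negbTE.
    have f13 : (u1 == u3) = false by apply/negbTE.
    have f23 : (u2 == u3) = false by apply/negbTE.
    have f21 : (u2 == u1) = false by rewrite eq_sym.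
    have f31 : (u3 == u1) = false by rewrite eq_sym.
    have f32 : (u3 == u2) = false by rewrite eq_sym.
    have fin : forall p q r, (p + q + r = s)%N -> (p <= 1)%N -> (q <= 1)%N ->
      (forall x, x = u1 -> x \in F0 :\ v -> p = 0%N) ->
      (forall x, x = u2 -> x \in F0 :\ v -> q = 0%N) ->
      (forall x, x = u3 -> x \in F0 :\ v -> r < s)%N ->
      I (fun x => b x - (x \in F0 :\ v))%N.
      move=> p q r pqr p1 q1 hp hq hr.
      apply: (@memI n C s e1 e2 e3 p q r) => // x.
      rewrite /b; case: (x =P u1) => [ex|n1].
        move: (hp x ex); rewrite ex u11 (d12 _ u11) (d13 _ u11).
        case: (u1 \in F0 :\ v) => [->//|_] /=; move: p1; clear; lia.
      case: (x =P u2) => [ex|n2].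
        move: (hq x ex); rewrite ex u22 (d21 _ u22) (d23 _ u22).
        case: (u2 \in F0 :\ v) => [->//|_] /=; move: q1; clear; lia.
      case: (x =P u3) => [ex|n3].
        move: (hr x ex); rewrite ex u33 (d31 _ u33) (d32 _ u33).
        case: (u3 \in F0 :\ v) => [h|_] /=; first by move: (h erefl) pqr; clear; lia.
        move: pqr p1 q1; clear; lia.
      have -> : (x \in F0 :\ v) = false.
        by rewrite inE F0E; apply/negbTE; rewrite negb_and !negb_or;
           apply/orP; right; apply/and3P; split; apply/eqP.
      move: pqr p1 q1; clear.
      case: (x \in e1); case: (x \in e2); case: (x \in e3); rewrite /=; lia.
    move: vF; rewrite F0E => /or3P[] /eqP ev.
    * apply: (fin 1 0 (s - 1))%N => //; first by move: s1; clear; lia.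
      - by move=> x ->; rewrite ev in_setD1 eqxx.
      - move=> x -> _; move: s1; clear; lia.
    * apply: (fin 0 1 (s - 1))%N => //; first by move: s1; clear; lia.
      - by move=> x ->; rewrite ev in_setD1 eqxx.
      - move=> x -> _; move: s1; clear; lia.
    * apply: (fin 0 0 s)%N => //.
      - by move=> x ->; rewrite ev in_setD1 eqxx.
- move=> H /and3P[/eqP cH /forall_inP bH IH].
  have HE : forall x, x \in H -> [|| x \in e1, x \in e2 | x \in e3].
    move=> x /bH; rewrite /b; move: s1; clear.
    by case: (x \in e1); case: (x \in e2); case: (x \in e3); rewrite /= ?muln0.
  have hE : forall v, v \notin e1 :|: e2 :|: e3 -> (b v - (v \in H))%N = 0%N.
    move=> v; rewrite !inE !negb_or /b => /andP[/andP[/negbTE -> /negbTE ->] /negbTE ->].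
    by rewrite muln0.
  have [m [sm bm]] := notI IH hM hE.
  rewrite big_setU1 ?inE ?negb_or ?E12 ?E13 // big_setU1 ?inE ?E23 // big_set1 in sm.
  have {}sm : (s <= m e1 + (m e2 + m e3))%N by [].
  have M1 : e1 \in e1 |: [set e2; e3] by rewrite !inE eqxx.
  have M2 : e2 \in e1 |: [set e2; e3] by rewrite !inE eqxx orbT.
  have M3 : e3 \in e1 |: [set e2; e3] by rewrite !inE eqxx !orbT.
  case: (boolP [exists x in H, x \in e2]) => [/exists_inP [y yH y2]|n2]; last first.
    apply: cb_zero => v vH; rewrite /f2 h1_0 ?mulr0 // => x; rewrite inE => /andP[_ xH].
    by apply/negP => x2; move: n2; apply/negP/negPn/exists_inP; exists x.
  case: (boolP [exists x in H, x \in e1]) => [/exists_inP [x xH x1]|n1]; last first.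
    apply: cb_zero => v vH; rewrite /f2 cbg1_0 ?mul0r // => z; rewrite inE => /andP[_ zH].
    by apply/negP => z1; move: n1; apply/negP/negPn/exists_inP; exists z.
  have He12 : forall z, z \in H -> (z \in e1) || (z \in e2).
    move=> z zH; case/or3P: (HE z zH) => [->|->|z3]; rewrite ?orbT //; exfalso.
    have := bm e1 x M1 x1; have := bm e2 y M2 y2; have := bm e3 z M3 z3.
    rewrite /b xH yH zH x1 (d12 _ x1) (d13 _ x1) y2 (d21 _ y2) (d23 _ y2).
    rewrite z3 (d31 _ z3) (d32 _ z3) /= => h3 h2 h1.
    by move: sm h1 h2 h3 s1; clear; lia.
  rewrite -(cbcb (@g1 K n e1) H); apply: cb_eq => v vH.
  apply: f2_two => //.
    by move: cH; rewrite (cardsD1 v) vH add1n => -[->].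
  by move=> z; rewrite inE => /andP[_ /He12].
- rewrite /cb big_setU1; last by rewrite !inE !negb_or eq_sym n13 eq_sym n23.
  rewrite big_setU1 ?inE // big_set1 /=.
  have -> : @f2 K n e1 e2 (F0 :\ u1) = 0.
    rewrite /f2 cbg1_0 ?mul0r // => z; rewrite in_setD1 F0E => /andP[nz].
    by case/or3P => /eqP ez; [rewrite ez eqxx in nz | rewrite ez (d21 _ u22) | rewrite ez (d31 _ u33)].
  have -> : @f2 K n e1 e2 (F0 :\ u2) = 0.
    rewrite /f2 h1_0 ?mulr0 // => z; rewrite in_setD1 F0E => /andP[nz].
    by case/or3P => /eqP ez; [rewrite ez (d12 _ u11) | rewrite ez eqxx in nz | rewrite ez (d32 _ u33)].
  rewrite !mulr0 !addr0 setU1K; last by rewrite !inE !negb_or eq_sym n13 eq_sym n23.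
  rewrite f2_two //; last first.
    by move=> z; rewrite !inE => /orP[] /eqP ->; rewrite ?u11 ?u22 ?orbT.
    by rewrite cards2 n12.
  rewrite cb_set2 // /g1 cardI0; last first.
    by move=> z; rewrite inE => /eqP ->; rewrite d21.
  rewrite cardIall; last by move=> z; rewrite inE => /eqP ->.
  by rewrite cards1 mulr0 add0r mulr1 mulf_neq0 ?sg_neq0.
Qed.

End Dev.
Local Close Scope ring_scope.
Lemma exists_im n (C : {set {set 'I_n}}) t : (0 < t)%N -> (t <= indmatch C)%N ->
  exists M, induced_matching C M /\ (t <= #|M|)%N.
Proof.
move=> t0 tI; case: (pickP (induced_matching C)) => [M0 hM0|none]; last first.
  by move: tI; rewrite /indmatch big_pred0 // leqn0 => /eqP t00; rewrite t00 in t0.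
have pos : (0 < #|induced_matching C|)%N by apply/card_gt0P; exists M0.
have [M hM eqM] := @eq_bigmax_cond _ (induced_matching C) (fun M => #|M|) pos.
by exists M; split => //; move: tI; rewrite /indmatch eqM.
Qed.

Lemma sub_im n (C M S : {set {set 'I_n}}) k : induced_matching C M -> S \subset M ->
  uniform k C -> (0 < k)%N ->
  forall e, e \in C -> e \subset \bigcup_(f in S) f -> e \in S.
Proof.
case/and3P => MC /forallP dis /forall_inP ind SM unif k0 e eC eS.
have eM : e \in M.
  apply: (implyP (ind e eC)); apply/subsetP => v ve.
  move: (subsetP eS v ve) => /bigcupP [f fS vf].
  by apply/bigcupP; exists f => //; apply: (subsetP SM).
case: (boolP (e \in S)) => // nS.
have [v ve] : exists v, v \in e by apply/card_gt0P; rewrite (unif e eC).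
move: (subsetP eS v ve) => /bigcupP [f fS vf].
have ef : e != f by apply/eqP => ef; rewrite ef fS in nS.
move: (dis e) => /implyP /(_ eM) /forallP /(_ f) /implyP /(_ (subsetP SM f fS)).
move=> /implyP /(_ ef) dEF.
by rewrite (disjointFr dEF ve) in vf.
Qed.

Lemma im_dis n (C M : {set {set 'I_n}}) e f : induced_matching C M ->
  e \in M -> f \in M -> e != f -> [disjoint e & f].
Proof.
case/and3P => _ /forallP dis _ eM fM ef.
by move: (dis e) => /implyP /(_ eM) /forallP /(_ f) /implyP /(_ fM) /implyP /(_ ef).
Qed.

Lemma im_C n (C M : {set {set 'I_n}}) e : induced_matching C M -> e \in M -> e \in C.
Proof. by case/and3P => /subsetP MC _ _ /MC. Qed.

Theorem corollary3p4 (K : fieldType) (n k s : nat) (C : {set {set 'I_n}}) :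
  clutter C -> uniform k C -> (2 <= s)%N ->
  (indmatch C = 2%N -> reg_ge K (edge_ideal_pow C s) (k * s + k - 1)) /\
  ((3 <= indmatch C)%N -> reg_ge K (edge_ideal_pow C s) (k * s + 2 * k - 2)).
Proof.
move=> _ unif s2.
have s1 : (1 <= s)%N by apply: leq_trans s2.
have kpos : forall M e1 e2, induced_matching C M -> e1 \in M -> e2 \in M -> e1 != e2 ->
    (0 < k)%N.
  move=> M e1 e2 hM e1M e2M ne; rewrite lt0n; apply/eqP => k0.
  move: (unif e1 (im_C hM e1M)) (unif e2 (im_C hM e2M)); rewrite k0.
  by move=> /cards0_eq h1 /cards0_eq h2; rewrite h1 h2 eqxx in ne.
split.
  move=> I2.
  have [M [hM cM]] := @exists_im n C 2 erefl (eq_leq (esym I2)).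
  have [e1 [e2 [e1M e2M ne]]] : exists e1 e2, [/\ e1 \in M, e2 \in M & e1 != e2].
    by apply/card_gt1P.
  have k0 := kpos M e1 e2 hM e1M e2M ne.
  apply: (@part1 K n k s C e1 e2 s1 k0 (im_C hM e1M) (im_C hM e2M)
    (unif e1 (im_C hM e1M)) (unif e2 (im_C hM e2M)) (im_dis hM e1M e2M ne)).
  move=> e eC eS; apply: (sub_im hM _ unif k0 eC).
    by apply/subsetP => f; rewrite !inE => /orP[] /eqP ->.
  by rewrite big_setU1 ?inE //= big_set1.
move=> I3.
have [M [hM cM]] := @exists_im n C 3 erefl I3.
have [e1 [e2 [e3 [[e1M e2M e3M] [n12 n23 n31]]]]] :
  exists e1 e2 e3, [/\ e1 \in M, e2 \in M & e3 \in M] /\ [/\ e1 != e2, e2 != e3 & e3 != e1].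
  by apply/card_gt2P.
have k0 := kpos M e1 e2 hM e1M e2M n12.
have n13 : e1 != e3 by rewrite eq_sym.
apply: (@part2 K n k s C e1 e2 e3 s1 k0 (im_C hM e1M) (im_C hM e2M) (im_C hM e3M)
  (unif e1 (im_C hM e1M)) (unif e2 (im_C hM e2M)) (unif e3 (im_C hM e3M))
  (im_dis hM e1M e2M n12) (im_dis hM e1M e3M n13) (im_dis hM e2M e3M n23)).
move=> e eC eS; apply: (sub_im hM _ unif k0 eC).
  by apply/subsetP => f; rewrite !inE => /or3P[] /eqP ->.
rewrite big_setU1 ?inE /=; last by rewrite negb_or n12 n13.
by rewrite big_setU1 ?inE //= big_set1 setUA.
Qed.
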